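(* Let $S\subseteq T$ be an extension of discrete valuation rings with fraction fields $K\subseteq L$ such that $L/K$ is finite Galois of degree $m$ with Galois group $G$, let $t$ generate the maximal ideal of $T$ with valuation $v_t$, and assume $T=S[\theta]$ for some $\theta\in T$. Enumerate $G=\{\sigma_0,\dots,\sigma_{m-1}\}$ with $\sigma_0=\mathrm{id}_T$ such that $\tau=(\tau_0,\dots,\tau_{m-1}):=(\theta^{\sigma_0},\dots,\theta^{\sigma_{m-1}})$ is minimally ordered, and identify $\prod_{\sigma\in G}T$ with $\prod_{j\in[0,m-1]}T$ via $\sigma_j\leftrightarrow j$. Consider the $T$-linear Dedekind embedding $\delta\colon T\otimes_ST\to\prod_{\sigma\in G}T$, $x\otimes y\mapsto(xy^\sigma)_{\sigma\in G}$ ($T$ acting on the left tensor factor). Then: (i) for $i\in[0,m-1]$ the $(i+1)$st $T$-linear elementary divisor of $\delta$ has valuation $\phi_i:=\sum_{j\in[0,i-1]}v_t(\theta^{\sigma_i}-\theta^{\sigma_j})$; in particular $(\phi_i)_{i\in[0,m-1]}$ depends neither on the choice of $\theta$ nor on the chosen minimal ordering; (ii) the image of $\delta$ equals \[ \Bigl\{(\eta_j)_{j\in[0,m-1]}\in\prod_{j\in[0,m-1]}T\;\Bigm|\;\eta_i-\sum_{j\in[0,i-1]}\eta_jL_{j,i}(\tau)\in t^{\phi_i}T\ \text{for all } i\in[0,m-1]\Bigr\}; \] (iii) the elements $\bigl(\prod_{k\in[0,i-1]}(\theta^{\sigma_j}-\theta^{\sigma_k})\bigr)_{j\in[0,m-1]}$,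 $i\in[0,m-1]$, form a $T$-linear basis of the image of $\delta$.
   Context: $y^\sigma$ denotes the image of $y$ under $\sigma$. A tuple $(\xi_0,\dots,\xi_{m-1})$ of pairwise distinct elements of $T$ is minimally ordered if $\sum_{i\in[0,j-1]}v_t(\xi_j-\xi_i)\le\sum_{i\in[0,j-1]}v_t(\xi_k-\xi_i)$ for all $j\in[0,m-1]$ and $k\in[j+1,m-1]$. For $j<i$, $L_{j,i}(\tau):=\prod_{k\in[0,i-1]\setminus\{j\}}(\tau_i-\tau_k)/\prod_{k\in[0,i-1]\setminus\{j\}}(\tau_j-\tau_k)\in L$. Elementary divisors of an injective $T$-linear map of free rank-$m$ modules: $t^{e_0},\dots,t^{e_{m-1}}$ with $e_0\le\dots\le e_{m-1}$ such that in suitable bases the map is diagonal with these entries; the $(i+1)$st has valuation $e_i$. *)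

(* Defs.v *)
From HB Require Import structures.
From mathcomp Require Import all_boot all_order all_algebra all_fingroup all_field.
Set Implicit Arguments. Unset Strict Implicit. Unset Printing Implicit Defensive.
Import Order.TTheory GRing.Theory Num.Theory.
Local Open Scope ring_scope.

(* L : splittingFieldType K is a finite (normal) extension
   of K; it is Galois when [galois 1 {:L}] holds, with group gal_of {:L}. *)

Section Defs.
Variable (L : fieldType).

(* v : L -> int is a discrete valuation on L (values at 0 are irrelevant). *)
Definition is_dval (v : L -> int) : Prop :=
  (forall x y : L, x != 0 -> y != 0 -> v (x * y) = v x + v y) /\
  (forall x y : L, x != 0 -> y != 0 -> x + y != 0 ->
      Num.min (v x) (v y) <= v (x + y)).

Definition inT (v : L -> int) (x : L) : Prop := x = 0 \/ 0 <= v x.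

Definition in_tpow (v : L -> int) (t : L) (n : int) (x : L) : Prop :=
  exists y, inT v y /\ x = t ^ n * y.

Definition minimally_ordered (v : L -> int) (m : nat) (xi : 'I_m -> L) : Prop :=
  injective xi /\
  forall j k : 'I_m, (j < k)%N ->
    \sum_(i < m | (i < j)%N) v (xi j - xi i) <= \sum_(i < m | (i < j)%N) v (xi k - xi i).

Definition Lcoef (m : nat) (tau : 'I_m -> L) (j i : 'I_m) : L :=
  (\prod_(k < m | ((k < i)%N && (k != j))) (tau i - tau k)) /
  (\prod_(k < m | ((k < i)%N && (k != j))) (tau j - tau k)).

Definition phi (v : L -> int) (m : nat) (tau : 'I_m -> L) (i : 'I_m) : int :=
  \sum_(j < m | (j < i)%N) v (tau i - tau j).

(* T-linear combinations; T-submodules of T^m given as predicates on 'rV[L]_m *)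
(* e : 'I_m -> int are the valuations of the elementary divisors of the
   inclusion M \subset T^m: e is nondecreasing and there is a T-basis
   (rows of P, P invertible over T) of T^m such that M is the T-span of
   the t^(e_i) * (row i P). *)
Definition elem_divs (v : L -> int) (t : L) (m : nat)
    (M : 'rV[L]_m -> Prop) (e : 'I_m -> int) : Prop :=
  (forall i j : 'I_m, (i <= j)%N -> e i <= e j) /\
  exists P Q : 'M[L]_m,
    (forall i j, inT v (P i j)) /\ (forall i j, inT v (Q i j)) /\
    P *m Q = 1%:M /\
    forall eta : 'rV[L]_m,
      M eta <-> exists c : 'rV[L]_m, (forall i, inT v (c 0 i)) /\
                  eta = (\row_i (c 0 i * t ^ (e i))) *m P.

Definition is_T_basis (v : L -> int) (m : nat) (M : 'rV[L]_m -> Prop)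
    (b : 'I_m -> 'rV[L]_m) : Prop :=
  (forall i, M (b i)) /\
  (forall eta, M eta -> exists c : 'I_m -> L,
       (forall i, inT v (c i)) /\ eta = \sum_i c i *: b i) /\
  (forall c : 'I_m -> L, (forall i, inT v (c i)) ->
       \sum_i c i *: b i = 0 -> forall i, c i = 0).
End Defs.

(* Image of the Dedekind embedding delta : T (x)_S T -> prod_{j} T,
   x (x) y |-> (x * sigma_j y)_j ; T-linear in the left factor, so its image
   is the set of finite sums of the vectors (x * sigma_j y)_j, x, y in T. *)
Definition im_delta (K : fieldType) (L : splittingFieldType K) (v : L -> int)
    (m : nat) (sigma : 'I_m -> gal_of {:L}) (eta : 'rV[L]_m) : Prop :=
  exists (n : nat) (x y : 'I_n -> L),
    (forall k, inT v (x k)) /\ (forall k, inT v (y k)) /\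
    eta = \sum_(k < n) \row_j (x k * sigma j (y k)).

(* Main.v *)
Require Import Defs.
From HB Require Import structures.
From mathcomp Require Import all_boot all_order all_algebra all_fingroup all_field.
From mathcomp Require Import ring lra.
From Stdlib Require Import FunctionalExtensionality.
Set Implicit Arguments. Unset Strict Implicit. Unset Printing Implicit Defensive.
Import Order.TTheory GRing.Theory Num.Theory.
Local Open Scope ring_scope.
Section Val.
Variables (L : fieldType) (v : L -> int) (hv : is_dval v).

Definition Tn (n : int) (x : L) := x = 0 \/ n <= v x.

Lemma vM x y : x != 0 -> y != 0 -> v (x * y) = v x + v y.
Proof. by case: hv => h _; apply: h. Qed.

Lemma v1 : v 1 = 0.
Proof.
by apply: (addrI (v 1)); rewrite -vM ?oner_neq0 // mulr1 addr0.
Qed.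

Lemma vV x : x != 0 -> v x^-1 = - v x.
Proof.
move=> x0; apply: (addrI (v x)); rewrite -vM ?invr_neq0 // mulfV // v1.
by rewrite subrr.
Qed.

Lemma vNone : v (-1) = 0.
Proof.
have n1 : (-1 : L) != 0 by rewrite oppr_eq0 oner_eq0.
have := vM n1 n1; rewrite mulrNN mulr1 v1 => /eqP; rewrite eq_sym -mulr2n.
by rewrite -mulr_natr mulf_eq0 orbF => /eqP.
Qed.

Lemma vN x : v (- x) = v x.
Proof.
have [->|x0] := eqVneq x 0; first by rewrite oppr0.
by rewrite -mulN1r vM ?oppr_eq0 ?oner_eq0 // vNone add0r.
Qed.

Lemma vmin x y : x != 0 -> y != 0 -> x + y != 0 ->
  Num.min (v x) (v y) <= v (x + y).
Proof. by case: hv => _ h; apply: h. Qed.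

Lemma TnD n x y : Tn n x -> Tn n y -> Tn n (x + y).
Proof.
move=> [->|hx]; first by rewrite add0r.
move=> [->|hy]; first by rewrite addr0; right.
have [s0|s0] := eqVneq (x + y) 0; first by left.
have [->|x0] := eqVneq x 0; first by rewrite add0r; right.
have [->|y0] := eqVneq y 0; first by rewrite addr0; right.
right; apply: le_trans (vmin x0 y0 s0).
by rewrite le_min hx hy.
Qed.

Lemma TnN n x : Tn n x -> Tn n (- x).
Proof. by move=> [->|h]; [left; rewrite oppr0 | right; rewrite vN]. Qed.

Lemma TnB n x y : Tn n x -> Tn n y -> Tn n (x - y).
Proof. by move=> hx hy; apply: TnD => //; apply: TnN. Qed.

Lemma Tn0 n : Tn n 0. Proof. by left. Qed.

Lemma TnM a b x y : Tn a x -> Tn b y -> Tn (a + b) (x * y).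
Proof.
move=> [->|hx]; first by rewrite mul0r; left.
move=> [->|hy]; first by rewrite mulr0; left.
have [->|x0] := eqVneq x 0; first by rewrite mul0r; left.
have [->|y0] := eqVneq y 0; first by rewrite mulr0; left.
by right; rewrite vM // lerD.
Qed.

Lemma TnW a b x : a <= b -> Tn b x -> Tn a x.
Proof. by move=> ab [->|h]; [left | right; apply: le_trans h]. Qed.

Lemma Tn_sum n (I : Type) (r : seq I) (P : pred I) (F : I -> L) :
  (forall i, P i -> Tn n (F i)) -> Tn n (\sum_(i <- r | P i) F i).
Proof. by move=> h; apply: big_ind => //; [apply: Tn0 | apply: TnD]. Qed.

Lemma Tn_prod (I : Type) (r : seq I) (P : pred I) (F : I -> L) :
  (forall i, P i -> Tn 0 (F i)) -> Tn 0 (\prod_(i <- r | P i) F i).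
Proof.
move=> h; apply: big_ind => //; first by right; rewrite v1.
by move=> x y hx hy; have := TnM hx hy; rewrite addr0.
Qed.

Lemma inT_Tn x : inT v x <-> Tn 0 x.
Proof. by []. Qed.

Lemma Tn1 : Tn 0 1. Proof. by right; rewrite v1. Qed.

Lemma vprod (I : Type) (r : seq I) (P : pred I) (F : I -> L) :
  (forall i, P i -> F i != 0) ->
  \prod_(i <- r | P i) F i != 0 /\
  v (\prod_(i <- r | P i) F i) = \sum_(i <- r | P i) v (F i).
Proof.
move=> h; apply: (big_ind2 (fun a b => a != 0 /\ v a = b)).
- by rewrite oner_eq0 v1.
- move=> x1 x2 y1 y2 [x0 <-] [y0 <-]; split; first by rewrite mulf_neq0.
  by rewrite vM.
- by move=> i /h.
Qed.

Variables (t : L) (ht0 : t != 0) (ht : v t = 1).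

Lemma vexpn (k : nat) : v (t ^+ k) = k%:Z.
Proof.
elim: k => [|k IH]; first by rewrite expr0 v1.
by rewrite exprS vM ?expf_neq0 // IH ht -add1n PoszD.
Qed.

Lemma texpz_neq0 (n : int) : t ^ n != 0.
Proof. by rewrite expfz_neq0. Qed.

Lemma vexpz (n : int) : v (t ^ n) = n.
Proof.
case: n => k; first by rewrite /exprz vexpn.
rewrite /exprz vV ?expf_neq0 // vexpn NegzE.
by [].
Qed.

Lemma in_tpowE n x : in_tpow v t n x <-> Tn n x.
Proof.
split.
  move=> [y [[->|hy] ->]]; first by rewrite mulr0; left.
  have [->|y0] := eqVneq y 0; first by rewrite mulr0; left.
  by right; rewrite vM ?texpz_neq0 // vexpz lerDl.
move=> [->|h]; first by exists 0; split; [left | rewrite mulr0].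
exists (t ^ (- n) * x); split; last first.
  by rewrite mulrA -expfzDr // subrr expr0z mul1r.
have [->|x0] := eqVneq x 0; first by left; rewrite mulr0.
by right; rewrite vM ?texpz_neq0 // vexpz addrC subr_ge0.
Qed.

End Val.
Section Lagr.
Variable (F : fieldType).

Lemma card_proper (I : finType) (P Q : pred I) j :
  (forall k, Q k -> P k) -> P j -> ~~ Q j -> (#|Q| < #|P|)%N.
Proof.
move=> QP Pj Qj; apply: proper_card; apply/properP; split.
  by apply/subsetP => k; rewrite /in_mem /=; apply: QP.
by exists j; rewrite /in_mem /=.
Qed.

Lemma size_prodX (I : finType) (Q : pred I) (a : I -> F) :
  size (\prod_(k | Q k) ('X - (a k)%:P)) = #|Q|.+1.
Proof.
rewrite -big_filter size_prod_XsubC size_filter.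
by rewrite -size_filter deprecated_filter_index_enum -cardE.
Qed.

Lemma lagr (I : finType) (P : pred I) (a : I -> F) (ainj : injective a)
   (p : {poly F}) : (size p <= #|P|)%N -> forall z,
  p.[z] = \sum_(j | P j) p.[a j] *
     ((\prod_(k | P k && (k != j)) (z - a k)) /
      (\prod_(k | P k && (k != j)) (a j - a k))).
Proof.
move=> sp z.
pose d j := \prod_(k | P k && (k != j)) (a j - a k).
pose Pi j := \prod_(k | P k && (k != j)) ('X - (a k)%:P).
have d0 j : d j != 0.
  by apply/prodf_neq0 => k /andP[_ kj]; rewrite subr_eq0 (inj_eq ainj) eq_sym.
have PiE j x : (Pi j).[x] = \prod_(k | P k && (k != j)) (x - a k).
  by rewrite horner_prod; apply: eq_bigr => k _; rewrite hornerXsubC.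
pose q := \sum_(j | P j) (p.[a j] / d j) *: Pi j.
have pq : p = q.
  apply/eqP; rewrite -subr_eq0; apply/eqP.
  apply: (@roots_geq_poly_eq0 _ _ [seq a k | k <- enum P]).
  - apply/allP => x /mapP[j0]; rewrite mem_enum => Pj0 ->.
    rewrite /root hornerD hornerN /q horner_sum (bigD1 j0) //= big1.
      by rewrite hornerZ PiE -/(d j0) addr0 mulfVK // subrr.
    move=> j /andP[Pj jj0]; rewrite hornerZ PiE (bigD1 j0) /=; last first.
      by apply/andP; split; [exact: Pj0 | rewrite eq_sym].
    by rewrite subrr mul0r mulr0.
  - by rewrite map_inj_uniq // enum_uniq.
  - rewrite size_map -cardE; apply: leq_trans (size_polyD _ _) _.
    rewrite size_polyN geq_max sp /=.
    apply: leq_trans (size_sum _ _ _) _.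
    apply/bigmax_leqP => j Pj; apply: leq_trans (size_scale_leq _ _) _.
    rewrite size_prodX; apply: (@card_proper _ P _ j) => //.
      by move=> k /andP[].
    by rewrite eqxx andbF.
rewrite {1}pq /q horner_sum; apply: eq_bigr => j _.
by rewrite hornerZ PiE mulrAC mulrA.
Qed.
End Lagr.
Section Mat.
Variables (L : fieldType) (v : L -> int) (hv : is_dval v).
Variables (m : nat) (tau : 'I_m -> L) (tauT : forall j, Tn v 0 (tau j))
  (tinj : injective tau).

Definition Nv (i : nat) (x : L) := \prod_(k < m | (k < i)%N) (x - tau k).
Definition Bm := \matrix_(i < m, j < m) Nv i (tau j).

Lemma Nv_root (i : nat) (j : 'I_m) : (j < i)%N -> Nv i (tau j) = 0.
Proof. by move=> ji; rewrite /Nv (bigD1 j) //= subrr mul0r. Qed.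

Lemma NvS (i : 'I_m) x : Nv i.+1 x = Nv i x * (x - tau i).
Proof.
rewrite /Nv (bigD1 i) //= mulrC; congr (_ * _); apply: eq_bigl => k.
rewrite ltnS leq_eqVlt -val_eqE /=.
by case: eqP => [->|_]; rewrite ?ltnn ?andbT ?andbF.
Qed.

Lemma Nvm j : Nv m (tau j) = 0.
Proof. exact: Nv_root. Qed.

Lemma Nv0 x : Nv 0 x = 1.
Proof. by rewrite /Nv big_pred0 // => k; rewrite ltn0. Qed.

Lemma Nv_T i x : Tn v 0 x -> Tn v 0 (Nv i x).
Proof. by move=> hx; rewrite /Nv; apply: (Tn_prod hv) => k _; apply: (TnB hv) => //. Qed.

Lemma vNv (i : 'I_m) : Nv i (tau i) != 0 /\ v (Nv i (tau i)) = phi v tau i.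
Proof.
apply: vprod => // k ki; rewrite subr_eq0 (inj_eq tinj).
by apply: contraTneq ki => ->; rewrite ltnn.
Qed.

Lemma Bm_T i j : Tn v 0 (Bm i j).
Proof. by rewrite mxE; apply: Nv_T. Qed.

Lemma Bm_unit : Bm \in unitmx.
Proof.
rewrite unitmxE unitfE -det_tr det_trig; last first.
  by apply/is_trig_mxP => i j ij; rewrite !mxE Nv_root.
by apply/prodf_neq0 => i _; rewrite !mxE; case: (vNv i).
Qed.

Lemma Brow_interp (l i : 'I_m) :
  Bm l i - \sum_(j < m | (j < i)%N) Bm l j * Lcoef tau j i =
  if l == i then Nv i (tau i) else 0.
Proof.
case: (ltngtP l i) => li.
- rewrite -val_eqE /= (ltn_eqF li).
  pose p := \prod_(k < m | (k < l)%N) ('X - (tau k)%:P).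
  have pE x : p.[x] = Nv l x.
    by rewrite /p horner_prod; apply: eq_bigr => k _; rewrite hornerXsubC.
  have sp : (size p <= #|(fun k : 'I_m => (k < i)%N)|)%N.
    rewrite /p size_prodX; apply: (@card_proper _ _ _ l) => //.
      by move=> k kl; apply: ltn_trans li.
    by rewrite ltnn.
  rewrite [Bm l i]mxE; have := lagr tinj sp (tau i); rewrite pE => ->.
  apply/eqP; rewrite subr_eq0; apply/eqP; apply: eq_bigr => j _.
  by rewrite mxE pE /Lcoef.
- rewrite -val_eqE /= (gtn_eqF li) mxE Nv_root // sub0r big1 ?oppr0 //.
  by move=> j ji; rewrite mxE Nv_root ?mul0r // (ltn_trans ji li).
- have -> : l = i by apply: val_inj.
  rewrite eqxx big1 ?subr0 ?mxE // => j ji.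
  by rewrite mxE Nv_root ?mul0r.
Qed.

Lemma Dform (c : 'rV_m) (i : 'I_m) :
  (c *m Bm) 0 i - \sum_(j < m | (j < i)%N) (c *m Bm) 0 j * Lcoef tau j i =
  c 0 i * Nv i (tau i).
Proof.
rewrite (eq_bigr (fun j => \sum_l c 0 l * (Bm l j * Lcoef tau j i))); last first.
  by move=> j _; rewrite mxE mulr_suml; apply: eq_bigr => l _; rewrite mulrA.
rewrite exchange_big /= mxE -sumrB.
rewrite (eq_bigr (fun l => c 0 l * (if l == i then Nv i (tau i) else 0))); last first.
  by move=> l _; rewrite -mulr_sumr -mulrBr Brow_interp.
rewrite (bigD1 i) //= eqxx big1 ?addr0 // => l li.
by rewrite (negPf li) mulr0.
Qed.

Definition MN (eta : 'rV[L]_m) :=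
  exists c : 'rV_m, (forall i, Tn v 0 (c 0 i)) /\ eta = c *m Bm.

Lemma MN0 : MN 0.
Proof. by exists 0; split => [i|]; rewrite ?mul0mx // mxE; left. Qed.

Lemma MN_add x y : MN x -> MN y -> MN (x + y).
Proof.
move=> [c [hc ->]] [d [hd ->]]; exists (c + d); split; last by rewrite mulmxDl.
by move=> i; rewrite mxE; apply: (TnD hv).
Qed.

Lemma MN_scale a x : Tn v 0 a -> MN x -> MN (a *: x).
Proof.
move=> ha [c [hc ->]]; exists (a *: c); split; last by rewrite scalemxAl.
by move=> i; rewrite mxE; have := TnM hv ha (hc i); rewrite addr0.
Qed.

Lemma MN_sum (I : Type) (r : seq I) (P : pred I) (F : I -> 'rV_m) :
  (forall i, P i -> MN (F i)) -> MN (\sum_(i <- r | P i) F i).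
Proof. by move=> h; apply: big_ind => //; [apply: MN0 | apply: MN_add]. Qed.

Lemma MN_tau x : MN x -> MN (\row_j (tau j * x 0 j)).
Proof.
move=> [c [hc ->]].
pose S : 'M_m := \matrix_(i, l) ((if l == i then tau i else 0) +
                                  ((val l == (val i).+1)%:R)).
have SB : S *m Bm = Bm *m diag_mx (\row_j tau j).
  apply/matrixP => i j; rewrite mul_mx_diag !mxE.
  rewrite (eq_bigr (fun l => (if l == i then tau i * Bm l j else 0) +
                   (val l == (val i).+1)%:R * Bm l j)); last first.
    by move=> l _; rewrite mxE mulrDl; case: eqP => _; rewrite ?mul0r.
  rewrite big_split /= -big_mkcond big_pred1_eq mxE.
  have -> : \sum_(l < m) (val l == (val i).+1)%:R * Bm l j = Nv i.+1 (tau j).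
    case: (ltnP i.+1 m) => im.
      rewrite (bigD1 (Ordinal im)) //= eqxx mul1r mxE big1 ?addr0 // => l lne.
      have -> : (val l == (val i).+1) = false.
        by apply/negP => /eqP h; case/eqP: lne; apply: val_inj.
      by rewrite mul0r.
    have -> : i.+1 = m by apply/eqP; rewrite eqn_leq im ltn_ord.
    rewrite Nvm big1 // => l _.
    have -> : (val l == m) = false by rewrite ltn_eqF ?ltn_ord.
    by rewrite mul0r.
  rewrite NvS; ring.
exists (c *m S); split.
  move=> i; rewrite mxE; apply: (Tn_sum hv) => l _.
  have : Tn v 0 (S l i).
    rewrite mxE; apply: (TnD hv); first by case: eqP => _; [apply: tauT | left].
    by case: eqP => _; [apply: (Tn1 hv) | left].
  by move=> h; have := TnM hv (hc l) h; rewrite addr0.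
rewrite -mulmxA SB mulmxA; apply/rowP => j.
by rewrite mul_mx_diag !mxE mulrC.
Qed.

Variable i0 : 'I_m.
Hypothesis i00 : val i0 = 0%N.

Lemma MN_one : MN (\row_j 1).
Proof.
exists (\row_i ((i == i0)%:R)); split.
  by move=> i; rewrite mxE; case: eqP => _; [apply: (Tn1 hv) | left].
apply/rowP => j; rewrite !mxE (bigD1 i0) //= big1 ?addr0.
  by rewrite !mxE eqxx mul1r i00 Nv0.
by move=> l li; rewrite mxE (negPf li) mul0r.
Qed.

Lemma PolyMN (f : {poly L}) : (forall k, Tn v 0 f`_k) ->
  MN (\row_j f.[tau j]).
Proof.
elim/poly_ind: f => [|f c IH] hf.
  have -> : \row_j (0 : {poly L}).[tau j] = 0 by apply/rowP => j; rewrite !mxE horner0.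
  exact: MN0.
have hf' : forall k, Tn v 0 f`_k.
  by move=> k; have := hf k.+1; rewrite coefD coefMX coefC /= addr0.
have hc : Tn v 0 c by have := hf 0%N; rewrite coefD coefMX coefC /= add0r.
have -> : \row_j (f * 'X + c%:P).[tau j] =
    \row_j (tau j * (\row_j f.[tau j]) 0 j) + c *: \row_j 1.
  by apply/rowP => j; rewrite !mxE hornerMXaddC mulr1 mulrC.
apply: MN_add; first by apply: MN_tau; apply: IH.
by apply: MN_scale => //; apply: MN_one.
Qed.

End Mat.
Section Uniq.
Variables (L : fieldType) (v : L -> int) (hv : is_dval v).
Variables (t : L) (ht0 : t != 0) (ht : v t = 1) (m : nat).

Definition eform (e : 'I_m -> int) (P : 'M[L]_m) (eta : 'rV[L]_m) :=
  exists c : 'rV[L]_m, (forall i, inT v (c 0 i)) /\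
    eta = (\row_i (c 0 i * t ^ (e i))) *m P.

Lemma TnMx n (g : 'rV[L]_m) (R : 'M[L]_m) :
  (forall i, Tn v n (g 0 i)) -> (forall i j, Tn v 0 (R i j)) ->
  forall j, Tn v n ((g *m R) 0 j).
Proof.
move=> hg hR j; rewrite mxE; apply: (Tn_sum hv) => l _.
by have := TnM hv (hg l) (hR l j); rewrite addr0.
Qed.

Lemma nz_row (X : 'M[L]_m) : X != 0 -> exists r, row r X != 0.
Proof.
move=> X0; case: (pickP (fun r => row r X != 0)) => [r hr|none]; first by exists r.
case/eqP: X0; apply/row_matrixP => r; rewrite row0.
by have := none r; move/negbFE/eqP.
Qed.

Lemma nz_entry (z : 'rV[L]_m) : z != 0 -> exists i, z 0 i != 0.
Proof.
move=> z0; case: (pickP (fun i => z 0 i != 0)) => [i hi|none]; first by exists i.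
case/eqP: z0; apply/rowP => i; rewrite mxE.
by have := none i; move/negbFE/eqP.
Qed.

Lemma ediv_le (M : 'rV[L]_m -> Prop) (e f : 'I_m -> int) (P Q P' Q' : 'M[L]_m) :
  (forall i j : 'I_m, (i <= j)%N -> e i <= e j) ->
  (forall i j : 'I_m, (i <= j)%N -> f i <= f j) ->
  (forall i j, inT v (P i j)) -> (forall i j, inT v (Q i j)) ->
  (forall i j, inT v (P' i j)) -> (forall i j, inT v (Q' i j)) ->
  P *m Q = 1%:M -> P' *m Q' = 1%:M ->
  (forall eta, M eta <-> eform e P eta) ->
  (forall eta, M eta <-> eform f P' eta) ->
  forall k, f k <= e k.
Proof.
move=> se sf PT QT P'T Q'T PQ P'Q' Me Mf k.
have [Pu _] := mulmx1_unit PQ.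
have [P'u _] := mulmx1_unit P'Q'.
have QP := mulmx1C PQ.
have Q'P' := mulmx1C P'Q'.
pose d1 : 'rV[L]_m := \row_i ((k <= i)%N)%:R.
pose d2 : 'rV[L]_m := \row_i ((i <= k)%N)%:R.
pose U := diag_mx d1 *m P'.
pose W := diag_mx d2 *m P.
have rU : \rank U = (m - k)%N.
  rewrite mxrankMfree ?row_free_unit //.
  have -> : diag_mx d1 = copid_mx k.
    apply/matrixP => i j; rewrite !mxE.
    case: (eqVneq i j) => [->|ij]; rewrite ?eqxx ?mulr1n.
      by rewrite leqNgt; case: (j < k)%N; rewrite /= ?subrr ?subr0.
    have ij' : (val i == val j) = false by apply/negbTE; rewrite val_eqE.
    by rewrite ij' /= ?(negbTE ij) mulr0n ?subr0.
  by rewrite rank_copid_mx // ltnW.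
have rW : \rank W = k.+1.
  rewrite mxrankMfree ?row_free_unit //.
  have -> : diag_mx d2 = pid_mx k.+1.
    apply/matrixP => i j; rewrite !mxE.
    case: (eqVneq i j) => [->|ij]; rewrite ?eqxx ?mulr1n ?ltnS //.
    have ij' : (val i == val j) = false by apply/negbTE; rewrite val_eqE.
    by rewrite ij' ?(negbTE ij) ?mulr0n.
  by rewrite rank_pid_mx.
have capnz : (U :&: W)%MS != 0.
  rewrite -mxrank_eq0; apply/eqP => r0.
  have := mxrank_sum_cap U W; rewrite r0 addn0 rU rW => h.
  have := rank_leq_col (U + W)%MS; rewrite h addnS subnK ?ltnn //.
  exact: ltnW.
have [r xnz] := nz_row capnz.
set x := row r _ in xnz.
have xU : (x <= U)%MS.
  exact: submx_trans (row_sub _ _) (capmxSl _ _).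
have xW : (x <= W)%MS.
  exact: submx_trans (row_sub _ _) (capmxSr _ _).
have [a xa] := submxP xU.
have [b xb] := submxP xW.
have [y yE] : {y | y = a *m diag_mx d1} by exists (a *m diag_mx d1).
have [z zE] : {z | z = x *m Q} by exists (x *m Q).
have xy : x = y *m P' by rewrite xa yE /U mulmxA.
have zb : z = b *m diag_mx d2 by rewrite zE xb /W -!mulmxA PQ mulmx1.
have xz : x = z *m P by rewrite zE -mulmxA QP mulmx1.
have y0 (i : 'I_m) : (i < k)%N -> y 0 i = 0.
  by move=> ik; rewrite yE mul_mx_diag !mxE leqNgt ik mulr0.
have z0 (i : 'I_m) : (k < i)%N -> z 0 i = 0.
  by move=> ki; rewrite zb mul_mx_diag !mxE leqNgt ki mulr0.
have znz : z != 0.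
  by apply: contra xnz => /eqP z0'; rewrite xz z0' mul0mx.
have [i1 hi1] := nz_entry znz.
case: (@arg_minP _ _ _ i1 (fun i => z 0 i != 0) (fun i => v (z 0 i) - e i) hi1).
move=> i0 hz0 hmin.
set s := v (z 0 i0) - e i0.
have tnz := texpz_neq0 ht0.
have vz := vexpz hv ht0 ht.
have tsnz : t ^ (- s) != 0 by apply: tnz.
have vts : v (t ^ (- s)) = - s by apply: vz.
have [x' x'E] : {x' | x' = t ^ (- s) *: x} by exists (t ^ (- s) *: x).
have [z' z'D] : {z' | z' = t ^ (- s) *: z} by exists (t ^ (- s) *: z).
have z'E : z' = x' *m Q by rewrite z'D x'E zE scalemxAl.
have Mx' : M x'.
  apply/Me; exists (\row_i (z' 0 i * t ^ (- e i))); split.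
    move=> i; rewrite !mxE z'D mxE.
    have [->|zi] := eqVneq (z 0 i) 0; first by rewrite !mulr0 mul0r; left.
    right; rewrite !vM ?mulf_neq0 ?tnz // vts !vz.
    have := hmin i zi; rewrite -/s => h.
    by rewrite -addrA addrC subr_ge0.
  transitivity (z' *m P); first by rewrite z'D x'E -scalemxAl -xz.
  congr (_ *m _); apply/rowP => i.
  by rewrite !mxE -mulrA -expfzDr // addNr expr0z mulr1.
have [g [dT xg]] : eform f P' x' by apply/Mf.
set G := \row_i _ in xg.
have Gy : G = t ^ (- s) *: y.
  have : G *m P' *m Q' = (t ^ (- s) *: y) *m P' *m Q'.
    by rewrite -xg x'E xy scalemxAl.
  by rewrite -!mulmxA P'Q' !mulmx1.
have GT i : Tn v (f k) (G 0 i).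
  case: (ltnP i k) => ik.
    by rewrite Gy mxE y0 // mulr0; left.
  rewrite /G mxE; apply: (TnW (sf _ _ ik)).
  have := TnM hv (dT i) (_ : Tn v (f i) (t ^ f i)); rewrite add0r; apply.
  by right; rewrite vz.
have RT i j : Tn v 0 ((P' *m Q) i j).
  rewrite mxE; apply: (Tn_sum hv) => l _.
  by have := TnM hv (P'T i l) (QT l j); rewrite addr0.
have z'G : z' = G *m (P' *m Q) by rewrite z'E xg mulmxA.
have := TnMx GT RT i0; rewrite -z'G z'D mxE.
case=> [/eqP|h].
  by rewrite mulf_eq0 (negPf tsnz) (negPf hz0).
have i0k : (i0 <= k)%N.
  by rewrite leqNgt; apply/negP => /z0 h0; move: hz0; rewrite h0 eqxx.
apply: le_trans h _; rewrite vM // vts /s.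
have -> : - (v (z 0 i0) - e i0) + v (z 0 i0) = e i0.
  by rewrite opprB subrK.
exact: se.
Qed.

End Uniq.
Section Gal.
Variables (K : fieldType) (L : splittingFieldType K).
Variables (v : L -> int) (hv : is_dval v).
Variable (hTG : forall (g : gal_of {:L}) (x : L), inT v x -> inT v (g x)).
Variables (theta : L) (hthT : inT v theta).
Variable (hgen : forall x : L, inT v x ->
     exists p : {poly K}, (forall i, inT v ((p`_i)%:A)) /\
                          x = (map_poly (in_alg L) p).[theta]).
Variables (n : nat) (sigma : 'I_n.+1 -> gal_of {:L}).
Local Notation m := n.+1.
Local Notation tau := (fun j : 'I_m => sigma j theta).
Hypothesis tinj : injective tau.

Let tauT j : Tn v 0 (tau j). Proof. exact: hTG. Qed.

Local Notation imd := (im_delta v sigma).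

Lemma imd0 : imd 0.
Proof.
exists 0%N, (fun _ => 0), (fun _ => 0); split; first by move=> [].
by split; [move=> [] | rewrite big_ord0].
Qed.

Lemma imd_add a b : imd a -> imd b -> imd (a + b).
Proof.
move=> [n1 [x1 [y1 [hx1 [hy1 ->]]]]] [n2 [x2 [y2 [hx2 [hy2 ->]]]]].
pose x k := match split k with inl a => x1 a | inr b => x2 b end.
pose y k := match split k with inl a => y1 a | inr b => y2 b end.
exists (n1 + n2)%N, x, y; split; last split.
- by move=> k; rewrite /x; case: split.
- by move=> k; rewrite /y; case: split.
have hxl k : x (lshift n2 k) = x1 k.
  by rewrite /x (unsplitK (inl _ k) : split (lshift n2 k) = inl k).
have hyl k : y (lshift n2 k) = y1 k.
  by rewrite /y (unsplitK (inl _ k) : split (lshift n2 k) = inl k).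
have hxr k : x (rshift n1 k) = x2 k.
  by rewrite /x (unsplitK (inr _ k) : split (rshift n1 k) = inr k).
have hyr k : y (rshift n1 k) = y2 k.
  by rewrite /y (unsplitK (inr _ k) : split (rshift n1 k) = inr k).
rewrite big_split_ord /=; congr (_ + _).
  by under [RHS]eq_bigr => k _ do rewrite hxl hyl.
by under [RHS]eq_bigr => k _ do rewrite hxr hyr.
Qed.

Lemma imd_scale c a : Tn v 0 c -> imd a -> imd (c *: a).
Proof.
move=> hc [n1 [x1 [y1 [hx1 [hy1 ->]]]]].
exists n1, (fun k => c * x1 k), y1; split; last split => //.
  by move=> k; have := TnM hv hc (hx1 k); rewrite addr0.
apply/rowP => j; rewrite !mxE !summxE mulr_sumr; apply: eq_bigr => k _.
by rewrite !mxE mulrA.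
Qed.

Lemma imd_tau a : imd a -> imd (\row_j (tau j * a 0 j)).
Proof.
move=> [n1 [x1 [y1 [hx1 [hy1 ->]]]]].
exists n1, x1, (fun k => theta * y1 k); split => //; split.
  by move=> k; have := TnM hv hthT (hy1 k); rewrite addr0.
apply/rowP => j; rewrite !mxE !summxE mulr_sumr; apply: eq_bigr => k _.
by rewrite !mxE rmorphM mulrCA.
Qed.

Lemma imd_one : imd (\row_j 1).
Proof.
exists 1%N, (fun _ => 1), (fun _ => 1); split; first by move=> _; apply: Tn1.
split; first by move=> _; apply: Tn1.
by rewrite big_ord1; apply/rowP => j; rewrite !mxE rmorph1 mulr1.
Qed.

Lemma imd_row (i : 'I_m) : imd (row i (Bm tau)).
Proof.
case: i => i; elim: i => [|i IH] hi.
  have -> : row (Ordinal hi) (Bm tau) = \row_j 1.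
    by apply/rowP => j; rewrite !mxE Nv0.
  exact: imd_one.
have hi' : (i < m)%N by apply: ltnW.
have := IH hi' => h.
have -> : row (Ordinal hi) (Bm tau) =
    \row_j (tau j * (row (Ordinal hi') (Bm tau)) 0 j) +
    (- tau (Ordinal hi')) *: row (Ordinal hi') (Bm tau).
  apply/rowP => j; rewrite !mxE.
  rewrite (NvS tau (Ordinal hi')) /=; ring.
apply: imd_add; first exact: imd_tau.
apply: imd_scale => //; apply: (TnN hv); exact: tauT.
Qed.

Lemma MN_imd eta : MN v tau eta -> imd eta.
Proof.
move=> [c [hc ->]]; rewrite mulmx_sum_row.
apply: big_ind => //; [exact: imd0 | exact: imd_add |].
by move=> i _; apply: imd_scale => //; apply: imd_row.
Qed.

Lemma imd_MN eta : imd eta -> MN v tau eta.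
Proof.
move=> [n1 [x1 [y1 [hx1 [hy1 ->]]]]].
apply: (MN_sum hv) => k _.
have [p [hp ->]] := hgen (hy1 k).
pose f := (x1 k)%:P * map_poly (in_alg L) p.
have -> : \row_j (x1 k * sigma j (map_poly (in_alg L) p).[theta]) =
          \row_j f.[tau j].
  apply/rowP => j; rewrite !mxE /f hornerCM; congr (_ * _).
  rewrite -horner_map /= -map_poly_comp; congr (_.[_]).
  by apply: eq_map_poly => a /=; rewrite rmorph_alg.
apply: (PolyMN hv tauT (i0 := ord0)) => // i.
rewrite /f coefCM coef_map /=.
by have := TnM hv (hx1 k) (hp i); rewrite addr0.
Qed.

End Gal.
Section Fin.
Variables (L : fieldType) (v : L -> int) (hv : is_dval v).
Variables (t : L) (ht0 : t != 0) (ht : v t = 1).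
Variables (m : nat) (tau : 'I_m -> L) (tauT : forall j, Tn v 0 (tau j)).
Hypothesis hmin : minimally_ordered v tau.

Let tinj : injective tau. Proof. by case: hmin. Qed.

Lemma vdiff_ge0 (j k : 'I_m) : j != k -> 0 <= v (tau j - tau k).
Proof.
move=> jk; have [|//] := TnB hv (tauT j) (tauT k).
by move/eqP; rewrite subr_eq0 (inj_eq tinj) (negPf jk).
Qed.

Lemma phi_sorted (i j : 'I_m) : (i <= j)%N -> phi v tau i <= phi v tau j.
Proof.
rewrite leq_eqVlt => /orP[/eqP ij|ij].
  by have -> : i = j by apply: val_inj.
apply: le_trans (proj2 hmin i j ij) _.
rewrite /phi (bigID (fun k : 'I_m => (k < i)%N) (fun k : 'I_m => (k < j)%N)) /=.
have -> : \sum_(k < m | (k < j)%N && (k < i)%N) v (tau j - tau k) =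
          \sum_(k < m | (k < i)%N) v (tau j - tau k).
  by apply: eq_bigl => k; case: (ltnP k i) => ki; rewrite ?andbT ?andbF // (ltn_trans ki ij).
rewrite lerDl; apply: sumr_ge0 => k /andP[kj _]; apply: vdiff_ge0.
by apply: contraTneq kj => ->; rewrite ltnn.
Qed.

Definition Pm := \matrix_(i < m, j < m) (Bm tau i j / Nv tau i (tau i)).

Lemma Pm_T i j : inT v (Pm i j).
Proof.
rewrite !mxE; case: (ltnP j i) => ji; first by rewrite Nv_root // mul0r; left.
have [nz vN] := vNv hv tinj i.
have [nz' vN'] : Nv tau i (tau j) != 0 /\
    v (Nv tau i (tau j)) = \sum_(k < m | (k < i)%N) v (tau j - tau k).
  apply: vprod => // k ki; rewrite subr_eq0 (inj_eq tinj).
  by apply: contraTneq ki => jk; rewrite -jk -leqNgt.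
right; rewrite vM ?invr_neq0 // vV // vN vN' subr_ge0.
move: ji; rewrite leq_eqVlt => /orP[/eqP ij|ij].
  by have -> : j = i by apply: val_inj.
exact: (proj2 hmin i j ij).
Qed.

Lemma det_T (k : nat) (A : 'M[L]_k) : (forall i j, inT v (A i j)) -> inT v (\det A).
Proof.
move=> hA; rewrite /determinant; apply: (Tn_sum hv) => s _.
have := TnM hv (_ : Tn v 0 ((-1) ^+ s)) (Tn_prod hv (index_enum _) (fun i (_ : true) => hA i (s i))).
rewrite addr0; apply.
case: (odd_perm s); rewrite ?expr1 ?expr0; first by apply: (TnN hv); apply: (Tn1 hv).
exact: (Tn1 hv).
Qed.

Lemma adj_T (k : nat) (A : 'M[L]_k) : (forall i j, inT v (A i j)) ->
  forall i j, inT v (\adj A i j).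
Proof.
move=> hA i j; rewrite mxE /cofactor.
have hs : Tn v 0 ((-1) ^+ (j + i) : L).
  rewrite -signr_odd; case: (odd _); rewrite ?expr1 ?expr0.
    by apply: (TnN hv); apply: (Tn1 hv).
  exact: (Tn1 hv).
have hd : inT v (\det (row' j (col' i A))) by apply: det_T => a b; rewrite !mxE.
by have := TnM hv hs hd; rewrite addr0.
Qed.

Lemma det_Pm : \det Pm = 1.
Proof.
rewrite -det_tr det_trig; last first.
  by apply/is_trig_mxP => i j ij; rewrite !mxE Nv_root ?mul0r.
apply: big1 => i _; rewrite !mxE divff //.
by case: (vNv hv tinj i).
Qed.

Lemma Pm_adj : Pm *m \adj Pm = 1%:M.
Proof. by rewrite mul_mx_adj det_Pm. Qed.

Lemma Pm_form (eta : 'rV[L]_m) :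
  MN v tau eta <-> exists c : 'rV[L]_m, (forall i, inT v (c 0 i)) /\
    eta = (\row_i (c 0 i * t ^ (phi v tau i))) *m Pm.
Proof.
have PmE : Pm = diag_mx (\row_i (Nv tau i (tau i))^-1) *m Bm tau.
  by rewrite mul_diag_mx; apply/matrixP => i j; rewrite !mxE mulrC.
have u0 i : t ^ phi v tau i / Nv tau i (tau i) != 0.
  by have [nz _] := vNv hv tinj i; rewrite mulf_neq0 ?invr_neq0 ?texpz_neq0.
have vu i : v (t ^ phi v tau i / Nv tau i (tau i)) = 0.
  have [nz vN] := vNv hv tinj i.
  by rewrite vM ?invr_neq0 ?texpz_neq0 // vV // vN (vexpz hv ht0 ht) subrr.
have vu' i : v ((t ^ phi v tau i / Nv tau i (tau i))^-1) = 0.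
  by rewrite vV // vu oppr0.
have Tu c u : v u = 0 -> Tn v 0 c -> Tn v 0 (c * u).
  move=> vu0 hc; have := TnM hv hc (_ : Tn v 0 u); rewrite addr0; apply.
  by right; rewrite vu0.
split.
  move=> [c [hc ->]].
  exists (\row_i (c 0 i * (t ^ phi v tau i / Nv tau i (tau i))^-1)); split.
    by move=> i; rewrite mxE; apply: Tu; [apply: vu' | apply: hc].
  rewrite PmE mulmxA mul_mx_diag; congr (_ *m _); apply/rowP => i.
  by rewrite !mxE -mulrA divfK // u0.
move=> [c [hc ->]].
exists (\row_i (c 0 i * (t ^ phi v tau i / Nv tau i (tau i)))); split.
  by move=> i; rewrite mxE; apply: Tu; [apply: vu | apply: hc].
rewrite PmE mulmxA mul_mx_diag; congr (_ *m _); apply/rowP => i.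
by rewrite !mxE mulrA.
Qed.

End Fin.
Section Basis.
Variables (L : fieldType) (v : L -> int) (hv : is_dval v).
Variables (m : nat) (tau : 'I_m -> L) (tinj : injective tau).

Definition bvec (i : 'I_m) : 'rV[L]_m :=
  \row_j \prod_(k < m | (k < i)%N) (tau j - tau k).

Lemma span_eq (c : 'rV[L]_m) : c *m Bm tau = \sum_i c 0 i *: bvec i.
Proof.
apply/rowP => j; rewrite summxE !mxE; apply: eq_bigr => i _.
by rewrite !mxE.
Qed.

Lemma MN_bvec i : MN v tau (bvec i).
Proof.
exists (\row_l ((l == i)%:R)); split.
  by move=> l; rewrite mxE; case: eqP => _; [apply: (Tn1 hv) | left].
apply/rowP => j; rewrite !mxE [RHS](bigD1 i) //= [X in _ + X]big1 ?addr0.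
  by rewrite !mxE eqxx mul1r.
by move=> l li; rewrite !mxE (negPf li) mul0r.
Qed.

Lemma bvec_indep (c : 'I_m -> L) : \sum_i c i *: bvec i = 0 -> forall i, c i = 0.
Proof.
move=> hsum i.
have : (\row_l c l) *m Bm tau = 0.
  by rewrite span_eq -[RHS]hsum; under eq_bigr => l _ do rewrite mxE.
move=> /(congr1 (fun r => r *m invmx (Bm tau))).
rewrite mulmxK ?(Bm_unit hv tinj) // mul0mx => /rowP /(_ i).
by rewrite !mxE.
Qed.
End Basis.

Unset Implicit Arguments.

Theorem proposition1p14
  (K : fieldType) (L : splittingFieldType K)
  (* L/K finite Galois *)
  (hgal : galois 1%VS {:L})
  (* T : the discrete valuation ring of the discrete valuation v on L;
     t generates its maximal ideal *)
  (v : L -> int) (hv : is_dval v) (t : L) (ht0 : t != 0) (ht : v t = 1)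
  (* S = T \cap K is a discrete valuation ring (v nontrivial on K) *)
  (hS : exists k : K, k != 0 /\ 0 < v (k%:A))
  (* the Galois group maps T into T *)
  (hTG : forall (g : gal_of {:L}) (x : L), inT v x -> inT v (g x))
  (* T = S[theta] *)
  (theta : L) (hthT : inT v theta)
  (hgen : forall x : L, inT v x ->
     exists p : {poly K}, (forall i, inT v ((p`_i)%:A)) /\
                          x = (map_poly (in_alg L) p).[theta])
  (* enumeration of G with sigma_0 = id and tau minimally ordered *)
  (m : nat) (sigma : 'I_m -> gal_of {:L}) (hsig : bijective sigma)
  (hsig0 : forall i : 'I_m, nat_of_ord i = 0%N -> sigma i = 1%g)
  (hmin : minimally_ordered v (fun j => sigma j theta)) :
  let tau := fun j : 'I_m => sigma j theta in
  (* (i) *)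
  (elem_divs v t (im_delta v sigma) (phi v tau) /\
   forall e : 'I_m -> int, elem_divs v t (im_delta v sigma) e -> e = phi v tau) /\
  (* (ii) *)
  (forall eta : 'rV[L]_m,
     im_delta v sigma eta <->
     ((forall j, inT v (eta 0 j)) /\
      forall i : 'I_m,
        in_tpow v t (phi v tau i)
          (eta 0 i - \sum_(j < m | (j < i)%N) eta 0 j * Lcoef tau j i))) /\
  (* (iii) *)
  is_T_basis v (im_delta v sigma)
    (fun i : 'I_m => \row_j (\prod_(k < m | (k < i)%N) (tau j - tau k))).
Proof.
cbv zeta.
have tinj : injective (fun j => sigma j theta) by case: hmin.
case: m sigma hsig hsig0 hmin tinj => [|n] sigma hsig hsig0 hmin tinj.
  by case: hsig => g _ _; case: (g 1%g).
set tau := fun j : 'I_n.+1 => sigma j theta.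
have tauT : forall j, Tn v 0 (tau j) by move=> j; apply: hTG.
have imdE eta : im_delta v sigma eta <-> MN v tau eta.
  by split; [apply: (imd_MN hv hTG hthT hgen) | apply: (MN_imd hv hTG hthT)].
have sorted := phi_sorted hv tauT hmin.
have edP : elem_divs v t (im_delta v sigma) (phi v tau).
  split; first exact: sorted.
  exists (Pm tau), (\adj (Pm tau)); split; first exact: Pm_T.
  split; first exact: (adj_T hv (Pm_T hv hmin)).
  split; first by have := Pm_adj hv hmin; move=> h; exact: h.
  by move=> eta; rewrite imdE; apply: Pm_form.
split; [split => // | split].
- move=> e [se [P [Q [PT [QT [PQ hM]]]]]].
  have HP : forall eta, im_delta v sigma eta <-> eform v t (phi v tau) (Pm tau) eta.
    by move=> eta; rewrite imdE; apply: Pm_form.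
  have HM : forall eta, im_delta v sigma eta <-> eform v t e P eta by exact: hM.
  have PmA := Pm_adj hv hmin.
  have PmT := Pm_T hv hmin.
  have AT := adj_T hv PmT.
  apply: functional_extensionality => k; apply/eqP; rewrite eq_le; apply/andP; split.
    exact: (ediv_le hv ht0 ht sorted se PmT AT PT QT PmA PQ HP HM).
  exact: (ediv_le hv ht0 ht se sorted PT QT PmT AT PQ PmA HM HP).
- move=> eta; rewrite imdE; split.
    move=> [c [hc ->]]; split.
      by move=> j; apply: (TnMx hv) => // a b; apply: Bm_T.
    move=> i; apply/(in_tpowE hv ht0 ht).
    have E : (c *m Bm tau) 0 i - \sum_(j < n.+1 | (j < i)%N) (c *m Bm tau) 0 j * Lcoef tau j i
        = c 0 i * Nv tau i (tau i) by have := Dform tinj c i; move=> h; exact: h.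
    rewrite E.
    have [nz vN] := vNv hv tinj i.
    have := TnM hv (hc i) (_ : Tn v (phi v tau i) (Nv tau i (tau i))).
    by rewrite add0r; apply; right; rewrite vN.
  move=> [_ hi].
  have [c etaE] : exists c, eta = c *m Bm tau.
    by exists (eta *m invmx (Bm tau)); rewrite mulmxKV // (Bm_unit hv tinj).
  exists c; split => //.
  move=> i; have := hi i; rewrite etaE; move/(in_tpowE hv ht0 ht).
  have E : (c *m Bm tau) 0 i - \sum_(j < n.+1 | (j < i)%N) (c *m Bm tau) 0 j * Lcoef tau j i
      = c 0 i * Nv tau i (tau i) by have := Dform tinj c i; move=> h; exact: h.
  rewrite E.
  have [nz vN] := vNv hv tinj i.
  case=> [/eqP|h].
    by rewrite mulf_eq0 (negPf nz) orbF => /eqP ->; left.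
  have [->|c0] := eqVneq (c 0 i) 0; first by left.
  by right; move: h; rewrite vM // vN lerDr.
- split; last split.
  + move=> i; apply: (MN_imd hv hTG hthT).
    by have h := MN_bvec hv tau i; exact: h.
  + move=> eta /imdE [c [hc ->]]; exists (fun i => c 0 i); split => //.
    by have h := span_eq tau c; exact: h.
  + move=> c hc hsum.
    have h := bvec_indep hv tinj (c := c); exact: (h hsum).
Qed.
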